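(* Let $\{\mathbf{x}^k=(\mathbf{x}_{(i)}^k)_i\}$, $\{\mathbf{y}^k=(\mathbf{y}_{(i)}^k)_i\}$, $\{\phi^k\}$ be generated by SONATA in the setting below, and let $\widetilde{\mathbf{x}}_i^k$ be the local minimizers it computes. There is a finite constant $B_2>0$, independent of $k$, such that for all $k\ge0$ and $i=1,\dots,I$, $$\|\widetilde{\mathbf{x}}_i^k-\widehat{\mathbf{x}}_i(\mathbf{x}_{(i)}^k)\|\le B_2\Big(\|\mathbf{y}_{(i)}^k-\bar{\mathbf{y}}_\phi^k\|+\sum_{j=1}^I\|\mathbf{x}_{(j)}^k-\bar{\mathbf{x}}_\phi^k\|\Big),$$ where $\bar{\mathbf{x}}_\phi^k\triangleq\frac1I\sum_{j}\phi_{(j)}^k\mathbf{x}_{(j)}^k$ and $\bar{\mathbf{y}}_\phi^k\triangleq\frac1I\sum_j\phi_{(j)}^k\mathbf{y}_{(j)}^k$.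
   Context: Problem: minimize $V(\mathbf{x})\triangleq F(\mathbf{x})+G(\mathbf{x})$, $F=\sum_{i=1}^If_i$, over $\mathbf{x}\in X$, where $X\subseteq\mathbb{R}^m$ is nonempty closed convex; each $f_i:O\to\mathbb{R}$ is $C^1$ on an open set $O\supseteq X$ with $\nabla f_i$ $L_i$-Lipschitz on $X$; $G:O\to\mathbb{R}$ is convex; $V$ is bounded below on $X$. Network: digraphs $G^k=(\{1,\dots,I\},E^k)$, $(j,i)\in E^k$ meaning $j$ can send to $i$, $B$-strongly connected ($\bigcup_{t=k}^{k+B-1}E^t$ strongly connected for every $k$). $\mathbf{A}^k=(a_{ij}^k)$: $a_{ij}^k=0$ if $j\ne i$ and $(j,i)\notin E^k$, $a_{ij}^k\ge\kappa$ if $(j,i)\in E^k$, $a_{ii}^k\ge\kappa$ ($\kappa>0$), nonnegative with $\mathbf{1}^T\mathbf{A}^k=\mathbf{1}^T$. Assumption III.14 on $\widetilde f_i:O\times O\to\mathbb{R}$: $\widetilde f_i(\cdot|\mathbf{x})$ is $\tau_i$-strongly convex on $X$ for all $\mathbf{x}\in X$; $C^1$ on $O$ with $\nabla\widetilde f_i(\mathbf{x}|\mathbf{x})=\nabla f_i(\mathbf{x})$; $\nabla\widetilde f_i(\mathbf{x}|\cdot)$ is $\widetilde L_i$-Lipschitz on $X$. SONATA with step-sizes $\gamma^k\in(0,1]$: initialize $\mathbf{x}_{(i)}^0\in X$, $\phi_{(i)}^0=1$, $\mathbf{y}_{(i)}^0=\nabla f_i(\mathbf{x}_{(i)}^0)$;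 at iteration $k$, $\widetilde{\mathbf{x}}_i^k=\operatorname{argmin}_{\mathbf{x}\in X}\{\widetilde f_i(\mathbf{x}|\mathbf{x}_{(i)}^k)+(I\mathbf{y}_{(i)}^k-\nabla f_i(\mathbf{x}_{(i)}^k))^T(\mathbf{x}-\mathbf{x}_{(i)}^k)+G(\mathbf{x})\}$, $\mathbf{x}_{(i)}^{k+1/2}=\mathbf{x}_{(i)}^k+\gamma^k(\widetilde{\mathbf{x}}_i^k-\mathbf{x}_{(i)}^k)$, $\phi_{(i)}^{k+1}=\sum_ja_{ij}^k\phi_{(j)}^k$, $\mathbf{x}_{(i)}^{k+1}=\frac{1}{\phi_{(i)}^{k+1}}\sum_ja_{ij}^k\phi_{(j)}^k\mathbf{x}_{(j)}^{k+1/2}$, $\mathbf{y}_{(i)}^{k+1}=\frac{1}{\phi_{(i)}^{k+1}}\sum_ja_{ij}^k\phi_{(j)}^k\mathbf{y}_{(j)}^k+\frac{1}{\phi_{(i)}^{k+1}}(\nabla f_i(\mathbf{x}_{(i)}^{k+1})-\nabla f_i(\mathbf{x}_{(i)}^k))$. The map $\widehat{\mathbf{x}}_i(\mathbf{z})\triangleq\operatorname{argmin}_{\mathbf{x}\in X}\{\widetilde f_i(\mathbf{x}|\mathbf{z})+(\nabla F(\mathbf{z})-\nabla f_i(\mathbf{z}))^T(\mathbf{x}-\mathbf{z})+G(\mathbf{x})\}$ for $\mathbf{z}\in X$. *)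

(* Defs.v *)
From Stdlib Require Import Reals Relations.
From mathcomp Require Import ssreflect ssrfun ssrbool eqtype ssrnat seq fintype bigop.
Set Implicit Arguments. Unset Strict Implicit. Unset Printing Implicit Defensive.

Open Scope R_scope.

Definition vec (m : nat) : Type := 'I_m -> R.

Definition vzero {m} : vec m := fun _ => 0.
Definition vadd {m} (u v : vec m) : vec m := fun c => u c + v c.
Definition vsub {m} (u v : vec m) : vec m := fun c => u c - v c.
Definition vscale {m} (a : R) (u : vec m) : vec m := fun c => a * u c.
Definition dot {m} (u v : vec m) : R := \big[Rplus/0]_(c < m) (u c * v c).
Definition norm {m} (u : vec m) : R := sqrt (dot u u).

Definition vsum {m n} (F : 'I_n -> vec m) : vec m :=
  fun c => \big[Rplus/0]_(j < n) F j c.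
Definition rsum {n} (F : 'I_n -> R) : R := \big[Rplus/0]_(j < n) F j.

Definition is_open {m} (O : vec m -> Prop) : Prop :=
  forall x, O x -> exists e, 0 < e /\ forall y, norm (vsub y x) < e -> O y.
Definition is_closed {m} (X : vec m -> Prop) : Prop :=
  is_open (fun x => ~ X x).
Definition convex_set {m} (X : vec m -> Prop) : Prop :=
  forall x y t, X x -> X y -> 0 <= t <= 1 ->
    X (vadd (vscale (1 - t) x) (vscale t y)).
Definition nonempty {m} (X : vec m -> Prop) : Prop := exists x, X x.
Definition set_incl {m} (X O : vec m -> Prop) : Prop := forall x, X x -> O x.

Definition convex_on {m} (S : vec m -> Prop) (g : vec m -> R) : Prop :=
  forall x y t, S x -> S y -> 0 <= t <= 1 ->
    S (vadd (vscale (1 - t) x) (vscale t y)) ->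
    g (vadd (vscale (1 - t) x) (vscale t y)) <= (1 - t) * g x + t * g y.

Definition strongly_convex_on {m} (tau : R) (X : vec m -> Prop) (g : vec m -> R) : Prop :=
  0 < tau /\
  forall x y t, X x -> X y -> 0 <= t <= 1 ->
    g (vadd (vscale (1 - t) x) (vscale t y))
      <= (1 - t) * g x + t * g y - tau / 2 * t * (1 - t) * (norm (vsub x y)) ^ 2.

Definition has_gradient {m} (g : vec m -> R) (gx : vec m) (x : vec m) : Prop :=
  forall eps, 0 < eps -> exists delta, 0 < delta /\
    forall h, norm h < delta ->
      Rabs (g (vadd x h) - g x - dot gx h) <= eps * norm h.

Definition continuous_on_vec {m} (O : vec m -> Prop) (G : vec m -> vec m) : Prop :=
  forall x, O x -> forall eps, 0 < eps -> exists delta, 0 < delta /\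
    forall y, O y -> norm (vsub y x) < delta -> norm (vsub (G y) (G x)) < eps.

Definition C1_on {m} (O : vec m -> Prop) (g : vec m -> R) (dg : vec m -> vec m) : Prop :=
  (forall x, O x -> has_gradient g (dg x) x) /\ continuous_on_vec O dg.

Definition lipschitz_on {m} (X : vec m -> Prop) (L : R) (G : vec m -> vec m) : Prop :=
  forall x y, X x -> X y -> norm (vsub (G x) (G y)) <= L * norm (vsub x y).

Definition is_argmin {m} (X : vec m -> Prop) (h : vec m -> R) (w : vec m) : Prop :=
  X w /\ forall z, X z -> h w <= h z.

(* E k j i : (j,i) \in E^k, i.e. j can send to i at time k *)
Definition strongly_connected {n} (Ed : 'I_n -> 'I_n -> Prop) : Prop :=
  forall i j : 'I_n, clos_refl_trans _ Ed i j.

Definition B_strongly_connected {n} (B : nat) (E : nat -> 'I_n -> 'I_n -> Prop) : Prop :=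
  forall k : nat,
    strongly_connected (fun j i => exists t : nat, (k <= t)%nat /\ (t < k + B)%nat /\ E t j i).

(* weight matrices a k i j = a_{ij}^k compatible with E, column stochastic *)
Definition compatible_weights {n} (kappa : R) (E : nat -> 'I_n -> 'I_n -> Prop)
  (a : nat -> 'I_n -> 'I_n -> R) : Prop :=
  0 < kappa /\
  (forall k i j, 0 <= a k i j) /\
  (forall k i j, j <> i -> ~ E k j i -> a k i j = 0) /\
  (forall k i j, E k j i -> kappa <= a k i j) /\
  (forall k i, kappa <= a k i i) /\
  (forall k j, rsum (fun i => a k i j) = 1).

(* Main.v *)
Require Import Defs.
From Stdlib Require Import Reals Relations.
From mathcomp Require Import ssreflect ssrfun ssrbool eqtype ssrnat seq fintype bigop.
Open Scope R_scope.
From HB Require Import structures.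
From Stdlib Require Import Lra FunctionalExtensionality.

Lemma RplusA' : associative Rplus. Proof. move=>*; lra. Qed.
Lemma RplusC' : commutative Rplus. Proof. move=>*; lra. Qed.
Lemma Rplus0' : left_id 0 Rplus. Proof. move=>*; lra. Qed.
HB.instance Definition _ := Monoid.isComLaw.Build R 0 Rplus RplusA' RplusC' Rplus0'.
Lemma RDl' : left_distributive Rmult Rplus. Proof. move=>*; lra. Qed.
Lemma RDr' : right_distributive Rmult Rplus. Proof. move=>*; lra. Qed.
Lemma R0l' : left_zero 0 Rmult. Proof. move=>*; lra. Qed.
Lemma R0r' : right_zero 0 Rmult. Proof. move=>*; lra. Qed.
HB.instance Definition _ := Monoid.isMulLaw.Build R 0 Rmult R0l' R0r'.
HB.instance Definition _ := Monoid.isAddLaw.Build R Rmult Rplus RDl' RDr'.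

Lemma sum_le n (F G : 'I_n -> R) : (forall j, F j <= G j) ->
  \big[Rplus/0]_(j < n) F j <= \big[Rplus/0]_(j < n) G j.
Proof. move=> H; apply: (big_ind2 (fun a b => a <= b)) => //; [lra|move=>*; lra]. Qed.

Lemma sum_ge0 n (F : 'I_n -> R) : (forall j, 0 <= F j) -> 0 <= \big[Rplus/0]_(j < n) F j.
Proof. move=> H; apply: (big_ind (fun a => 0 <= a)) => //; [lra|move=>*; lra]. Qed.

Lemma sum_ge_term n (F : 'I_n -> R) i : (forall j, 0 <= F j) -> F i <= \big[Rplus/0]_(j < n) F j.
Proof. move=> H; rewrite (bigD1 i) //=.
rewrite -{1}(Rplus_0_r (F i)); apply Rplus_le_compat_l.
apply: (big_ind (fun a => 0 <= a)) => //; [lra|move=>*; lra]. Qed.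

Lemma sumD n (F G : 'I_n -> R) :
  \big[Rplus/0]_(j < n) (F j + G j) = \big[Rplus/0]_(j < n) F j + \big[Rplus/0]_(j < n) G j.
Proof. exact: big_split. Qed.

Lemma sumZ n a (F : 'I_n -> R) :
  \big[Rplus/0]_(j < n) (a * F j) = a * \big[Rplus/0]_(j < n) F j.
Proof. by rewrite big_distrr. Qed.

Lemma sumB n (F G : 'I_n -> R) :
  \big[Rplus/0]_(j < n) (F j - G j) = \big[Rplus/0]_(j < n) F j - \big[Rplus/0]_(j < n) G j.
Proof. rewrite (@eq_bigr _ _ _ _ _ _ _ (fun j => F j + (-1) * G j)); last by move=> j _; ring.
rewrite big_split /= -big_distrr /=; ring. Qed.

Lemma sum0 n (F : 'I_n -> R) : (forall j, F j = 0) -> \big[Rplus/0]_(j < n) F j = 0.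
Proof. move=> H; rewrite big1 //. Qed.

Lemma sum_ext n (F G : 'I_n -> R) : (forall j, F j = G j) ->
  \big[Rplus/0]_(j < n) F j = \big[Rplus/0]_(j < n) G j.
Proof. move=> H; exact: eq_bigr. Qed.

Section Norms.
Set Implicit Arguments.
Variable m : nat.
Implicit Types u v w : vec m.

Lemma dot_ext u u' v v' : (forall c, u c = u' c) -> (forall c, v c = v' c) -> dot u v = dot u' v'.
Proof. move=> Hu Hv; rewrite /dot; apply: sum_ext => c; by rewrite Hu Hv. Qed.

Lemma norm_ext u u' : (forall c, u c = u' c) -> norm u = norm u'.
Proof. move=> H; rewrite /norm (@dot_ext u u' u u' H H) //. Qed.

Lemma dot_ge0 u : 0 <= dot u u.
Proof. apply: sum_ge0 => c; nra. Qed.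

Lemma dot_sym u v : dot u v = dot v u.
Proof. apply: sum_ext => c; ring. Qed.

Lemma norm_ge0 u : 0 <= norm u.
Proof. exact: sqrt_pos. Qed.

Lemma norm_sq u : norm u * norm u = dot u u.
Proof. rewrite /norm sqrt_sqrt //; exact: dot_ge0. Qed.

Lemma dot_zero u : norm u = 0 -> forall c, u c = 0.
Proof. move=> H c. have H1 := norm_sq u. rewrite H in H1.
have := @sum_ge_term m (fun c => u c * u c) c (fun c => ltac:(nra)).
rewrite -/(dot u u) -H1 => ?; nra. Qed.

Lemma dot_zero_l u v : norm u = 0 -> dot u v = 0.
Proof. move=> H; apply: sum0 => c; rewrite (@dot_zero u H c); ring. Qed.

Lemma CS u v : dot u v <= norm u * norm v.
Proof.
have hu := norm_ge0 u; have hv := norm_ge0 v.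
case: (Req_dec (norm u) 0) => [E|Nu].
  rewrite dot_zero_l // E; lra.
case: (Req_dec (norm v) 0) => [E|Nv].
  rewrite dot_sym dot_zero_l // E; lra.
set a := norm u; set b := norm v.
have H := dot_ge0 (fun c => b * u c - a * v c).
have E : dot (fun c => b * u c - a * v c) (fun c => b * u c - a * v c)
   = (b*b) * dot u u + (- 2 * a * b) * dot u v + (a*a) * dot v v.
  rewrite /dot -!sumZ -!sumD; apply: sum_ext => c; ring.
rewrite E -!norm_sq -/a -/b in H.
have ha : 0 < a by case: hu => // E'; exfalso; apply: Nu; rewrite -E'.
have hb : 0 < b by case: hv => // E'; exfalso; apply: Nv; rewrite -E'.
have : 0 < a * b by apply: Rmult_lt_0_compat.
nra. Qed.

Lemma norm_tri u v w : (forall c, w c = u c + v c) -> norm w <= norm u + norm v.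
Proof.
move=> H.
have E : dot w w = dot u u + 2 * dot u v + dot v v.
  rewrite /dot -!sumZ -!sumD; apply: sum_ext => c; rewrite H; ring.
have := CS u v; have hu := norm_ge0 u; have hv := norm_ge0 v => hc.
rewrite /norm -(sqrt_square (norm u + norm v)); last lra.
apply: sqrt_le_1_alt. rewrite E.
have h1 := norm_sq u; have h2 := norm_sq v. nra.
Qed.

Lemma norm_scale a u w : (forall c, w c = a * u c) -> norm w = Rabs a * norm u.
Proof.
move=> H; have E : dot w w = (a*a) * dot u u.
  rewrite /dot -!sumZ; apply: sum_ext => c; rewrite H; ring.
rewrite /norm E sqrt_mult_alt; last nra.
by rewrite -/(Rsqr a) sqrt_Rsqr_abs.
Qed.

Lemma norm_zero u : (forall c, u c = 0) -> norm u = 0.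
Proof. move=> H; rewrite /norm /dot sum0 ?sqrt_0 // => c; rewrite H; ring. Qed.

Lemma norm_vsub_sym u v : norm (vsub u v) = norm (vsub v u).
Proof. rewrite (@norm_scale (-1) (vsub v u) (vsub u v)); [by rewrite Rabs_Ropp Rabs_R1 Rmult_1_l | move=> c; rewrite /vsub; ring]. Qed.

Lemma norm_vsub_tri u v w : norm (vsub u w) <= norm (vsub u v) + norm (vsub v w).
Proof. apply: norm_tri => c; rewrite /vsub; ring. Qed.

Lemma norm_vsum n (F : 'I_n -> vec m) :
  norm (vsum F) <= \big[Rplus/0]_(j < n) norm (F j).
Proof.
elim: n F => [|n IH] F.
  rewrite big_ord0 norm_zero; [lra| move=> c; by rewrite /vsum big_ord0].
rewrite big_ord_recr /=.
apply: Rle_trans (_ : norm (vsum (fun j : 'I_n => F (widen_ord (leqnSn n) j))) + norm (F ord_max) <= _).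
  apply: norm_tri => c; by rewrite /vsum big_ord_recr.
apply: Rplus_le_compat_r; exact: IH.
Qed.

End Norms.

Lemma convex_comb m (X : vec m -> Prop) : convex_set X -> forall n (w : 'I_n -> R) (p : 'I_n -> vec m),
  (forall j, 0 <= w j) -> (forall j, X (p j)) -> 0 < \big[Rplus/0]_(j < n) w j ->
  X (vscale (/ \big[Rplus/0]_(j < n) w j) (vsum (fun j => vscale (w j) (p j)))).
Proof.
move=> HX; elim=> [|n IH] w p Hw Hp.
  rewrite big_ord0; lra.
rewrite big_ord_recr /=.
set s := \big[Rplus/0]_(j < n) w (widen_ord (leqnSn n) j).
have s0 : 0 <= s by apply: sum_ge0 => j; exact: Hw.
move=> Hpos.
case: (Req_dec s 0) => [E|Ns].
  have Z : forall j : 'I_n, w (widen_ord (leqnSn n) j) = 0.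
    move=> j; have := @sum_ge_term n (fun j => w (widen_ord (leqnSn n) j)) j (fun j => Hw _).
    rewrite -/s E => h; have := Hw (widen_ord (leqnSn n) j); lra.
  have -> : vscale (/ (s + w ord_max)) (vsum (fun j => vscale (w j) (p j))) = p ord_max.
    apply: functional_extensionality => c.
    rewrite /vscale /vsum big_ord_recr /= sum0; last by move=> j; rewrite Z; ring.
    rewrite E in Hpos *. field. lra.
  exact: Hp.
have sp : 0 < s by lra.
have Hq := IH (fun j => w (widen_ord (leqnSn n) j)) (fun j => p (widen_ord (leqnSn n) j))
   (fun j => Hw _) (fun j => Hp _) sp.
rewrite -/s in Hq.
set t := w ord_max / (s + w ord_max).
have ht : 0 <= t <= 1.
  have := Hw ord_max => h; rewrite /t; split.
  apply: Rmult_le_pos => //; apply: Rlt_le; apply: Rinv_0_lt_compat; lra.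
  apply: (Rmult_le_reg_r (s + w ord_max)); first lra.
  rewrite /Rdiv Rmult_assoc Rinv_l; lra.
have := HX _ _ t Hq (Hp ord_max) ht.
have -> : vadd (vscale (1 - t) (vscale (/ s) (vsum (fun j : 'I_n => vscale (w (widen_ord (leqnSn n) j)) (p (widen_ord (leqnSn n) j))))))
   (vscale t (p ord_max)) = vscale (/ (s + w ord_max)) (vsum (fun j => vscale (w j) (p j))).
  apply: functional_extensionality => c.
  rewrite /vadd /vscale /vsum big_ord_recr /= /t.
  field; lra.
done.
Qed.

Lemma argmin_stab m (X O : vec m -> Prop) (g G : vec m -> R) tau (l1 l2 x0 w1 w2 : vec m) :
  convex_set X -> set_incl X O -> strongly_convex_on tau X g -> convex_on O G ->
  is_argmin X (fun z => g z + dot l1 (vsub z x0) + G z) w1 ->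
  is_argmin X (fun z => g z + dot l2 (vsub z x0) + G z) w2 ->
  norm (vsub w1 w2) <= 2 / tau * norm (vsub l1 l2).
Proof.
move=> HX HXO [Ht Hg] HG [X1 M1] [X2 M2].
have hh : 0 <= 1/2 <= 1 by lra.
set pm := vadd (vscale (1 - 1/2) w1) (vscale (1/2) w2).
have Xp : X pm := HX _ _ _ X1 X2 hh.
have sg := Hg _ _ _ X1 X2 hh. rewrite -/pm in sg.
have sG := HG _ _ _ (HXO _ X1) (HXO _ X2) hh (HXO _ Xp). rewrite -/pm in sG.
have m1 := M1 _ Xp; have m2 := M2 _ Xp.
have lin : forall l, dot l (vsub pm x0) = 1/2 * dot l (vsub w1 x0) + 1/2 * dot l (vsub w2 x0).
  move=> l; rewrite /dot -!sumZ -sumD; apply: sum_ext => c; rewrite /vsub /pm /vadd /vscale.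
field.
rewrite !lin /= in m1 m2.
have D : dot l1 (vsub w2 x0) - dot l1 (vsub w1 x0) - dot l2 (vsub w2 x0) + dot l2 (vsub w1 x0)
   = dot (vsub l1 l2) (vsub w2 w1).
  rewrite /dot -!sumB -sumD.
  apply: sum_ext => c; rewrite /vsub; ring.
have cs := CS (vsub l1 l2) (vsub w2 w1).
rewrite (norm_vsub_sym w2 w1) in cs.
set d := norm (vsub w1 w2) in sg cs *.
set N := norm (vsub l1 l2) in cs *.
have key : tau / 2 * (d * d) <= N * d.
  have e : tau / 2 * (1 / 2) * (1 - 1 / 2) * d ^ 2 = tau/8*(d*d) by field.
  rewrite e in sg. set q := tau * (d * d) in sg *.
  have e2 : tau / 2 * (d * d) = q / 2 by rewrite /q; field.
  have e3 : tau / 8 * (d * d) = q / 8 by rewrite /q; field.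
  rewrite e2; rewrite e3 in sg. set r := N * d in cs *. lra.
have d0 : 0 <= d := norm_ge0 _.
have N0 : 0 <= N := norm_ge0 _.
case: d0 => [dpos|<-]; last first.
  apply: Rmult_le_pos => //; apply: Rlt_le; apply: Rdiv_lt_0_compat; lra.
have : tau / 2 * d <= N.
  apply: (Rmult_le_reg_r d) => //; nra.
move=> h; apply: (Rmult_le_reg_l (tau/2)); first lra.
rewrite /Rdiv; field_simplify; lra.
Qed.
Theorem mainTheorem16
  (m I : nat)
  (* problem data *)
  (X O : vec m -> Prop)
  (f : 'I_I -> vec m -> R) (gf : 'I_I -> vec m -> vec m) (L : 'I_I -> R)
  (G : vec m -> R)
  (HX : nonempty X /\ is_closed X /\ convex_set X)
  (HO : is_open O /\ set_incl X O)
  (Hf : forall i, C1_on O (f i) (gf i))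
  (HL : forall i, 0 <= L i /\ lipschitz_on X (L i) (gf i))
  (HG : convex_on O G)
  (HV : exists c, forall x, X x -> c <= rsum (fun i => f i x) + G x)
  (* network *)
  (B : nat) (E : nat -> 'I_I -> 'I_I -> Prop) (kappa : R)
  (a : nat -> 'I_I -> 'I_I -> R)
  (HB : (0 < B)%nat /\ B_strongly_connected B E)
  (Ha : compatible_weights kappa E a)
  (* surrogates, Assumption III.14: ft i x z = f~_i(x | z), gft i x z = grad_x f~_i(x | z) *)
  (ft : 'I_I -> vec m -> vec m -> R) (gft : 'I_I -> vec m -> vec m -> vec m)
  (tau Lt : 'I_I -> R)
  (Hsc : forall i z, X z -> strongly_convex_on (tau i) X (fun x => ft i x z))
  (HC1 : forall i z, X z -> C1_on O (fun x => ft i x z) (fun x => gft i x z))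
  (Hcons : forall i x, X x -> gft i x x = gf i x)
  (HLt : forall i x, X x -> 0 <= Lt i /\ lipschitz_on X (Lt i) (fun z => gft i x z))
  (* SONATA iterates *)
  (gamma : nat -> R)
  (x xhalf y xt : nat -> 'I_I -> vec m) (phi : nat -> 'I_I -> R)
  (Hgamma : forall k, 0 < gamma k <= 1)
  (Hx0 : forall i, X (x 0%nat i))
  (Hphi0 : forall i, phi 0%nat i = 1)
  (Hy0 : forall i, y 0%nat i = gf i (x 0%nat i))
  (Hxt : forall k i, is_argmin X
      (fun z => ft i z (x k i)
                + dot (vsub (vscale (INR I) (y k i)) (gf i (x k i))) (vsub z (x k i))
                + G z) (xt k i))
  (Hxhalf : forall k i,
      xhalf k i = vadd (x k i) (vscale (gamma k) (vsub (xt k i) (x k i))))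
  (Hphi : forall k i, phi k.+1 i = rsum (fun j => a k i j * phi k j))
  (Hx : forall k i,
      x k.+1 i = vscale (/ phi k.+1 i) (vsum (fun j => vscale (a k i j * phi k j) (xhalf k j))))
  (Hy : forall k i,
      y k.+1 i = vadd (vscale (/ phi k.+1 i) (vsum (fun j => vscale (a k i j * phi k j) (y k j))))
                      (vscale (/ phi k.+1 i) (vsub (gf i (x k.+1 i)) (gf i (x k i))))) :
  exists B2 : R, 0 < B2 /\
    forall (k : nat) (i : 'I_I) (w : vec m),
      (* w = xhat_i(x_(i)^k) *)
      is_argmin X
        (fun z => ft i z (x k i)
                  + dot (vsub (vsum (fun j => gf j (x k i))) (gf i (x k i))) (vsub z (x k i))
                  + G z) w ->
      norm (vsub (xt k i) w)
        <= B2 * ( norm (vsub (y k i) (vscale (/ INR I) (vsum (fun j => vscale (phi k j) (y k j)))))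
                  + rsum (fun j => norm (vsub (x k j)
                                   (vscale (/ INR I) (vsum (fun l => vscale (phi k l) (x k l))))))).
Proof.
case: HX => [[z0 Hz0] [Hcl Hcv]].
case: HO => [Hop HXO].
case: Ha => [Hk [Ha0 [_ [_ [Haii Hcol]]]]].
have tpos : forall j, 0 < tau j by move=> j; case: (Hsc j z0 Hz0).
have Ppos : forall k j, 0 < phi k j.
  elim=> [|k IH] j; first by rewrite Hphi0; lra.
  rewrite Hphi /rsum.
  apply: Rlt_le_trans (_ : a k j j * phi k j <= _).
    apply: Rmult_lt_0_compat => //; have := Haii k j; lra.
  apply: (@sum_ge_term _ (fun l => a k j l * phi k l) j) => l.
  apply: Rmult_le_pos => //; apply: Rlt_le; exact: IH.
have Xx : forall k j, X (x k j).
  elim=> [|k IH] j; first exact: Hx0.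
  have Xh : forall l, X (xhalf k l).
    move=> l; have [Xt _] := Hxt k l.
    have -> : xhalf k l = vadd (vscale (1 - gamma k) (x k l)) (vscale (gamma k) (xt k l)).
      rewrite Hxhalf; apply: functional_extensionality => c; rewrite /vadd /vscale /vsub; ring.
    apply: Hcv => //; have := Hgamma k; lra.
  rewrite Hx Hphi /rsum.
  apply: (@convex_comb m X Hcv I (fun l => a k j l * phi k l) (xhalf k)) => //.
    move=> l; apply: Rmult_le_pos => //; apply: Rlt_le; exact: Ppos.
  rewrite -/(rsum _) -Hphi; exact: Ppos.
have Inv : forall k c, \big[Rplus/0]_(j < I) (phi k j * y k j c) = \big[Rplus/0]_(j < I) (gf j (x k j) c).
  elim=> [|k IH] c.
    apply: sum_ext => j; rewrite Hphi0 Hy0; ring.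
  have E0 : forall j, phi k.+1 j * y k.+1 j c
      = \big[Rplus/0]_(l < I) (a k j l * (phi k l * y k l c)) + (gf j (x k.+1 j) c - gf j (x k j) c).
    move=> j; rewrite Hy /vadd /vscale /vsum /vsub.
    have := Ppos k.+1 j => hp.
    rewrite (@sum_ext _ (fun l => a k j l * phi k l * y k l c) (fun l => a k j l * (phi k l * y k l c))); last by move=> l; ring.
    field; lra.
  rewrite (@sum_ext _ _ _ E0) sumD sumB exchange_big /=.
  rewrite (@sum_ext _ (fun l => \big[Rplus/0]_(j < I) (a k j l * (phi k l * y k l c))) (fun l => phi k l * y k l c)).
    rewrite IH.
set A1 := \big[Rplus/0]_(j < I) gf j (x k j) c; set B1 := \big[Rplus/0]_(j < I) gf j (x k.+1 j) c; ring.
  move=> l; rewrite -big_distrl /=. have := Hcol k l; rewrite /rsum => ->; ring.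
set Ls := rsum L. set T := rsum (fun j => / tau j).
have Ls0 : 0 <= Ls by apply: sum_ge0 => j; case: (HL j).
have T0 : 0 <= T by apply: sum_ge0 => j; apply: Rlt_le; apply: Rinv_0_lt_compat; exact: tpos.
exists (2 * T * (INR I + 2 * Ls) + 1); split.
  have := pos_INR I; nra.
move=> k i w Hw.
have nI : 0 < INR I.
  apply: lt_0_INR; apply/ltP; case: i {Hw} => ii hi; exact: leq_ltn_trans (leq0n ii) hi.
set xb := vscale (/ INR I) (vsum (fun l => vscale (phi k l) (x k l))).
set yb := vscale (/ INR I) (vsum (fun j => vscale (phi k j) (y k j))).
set Dy := norm (vsub (y k i) yb).
set Dx := rsum (fun j => norm (vsub (x k j) xb)).
have Dy0 : 0 <= Dy := norm_ge0 _.
have Dx0 : 0 <= Dx by apply: sum_ge0 => j; exact: norm_ge0.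
have St := @argmin_stab m X O (fun z => ft i z (x k i)) G (tau i) _ _ (x k i) (xt k i) w Hcv HXO
   (Hsc i (x k i) (Xx k i)) HG (Hxt k i) Hw.
set N := norm (vsub (vsub _ _) (vsub _ _)) in St.
have HN : N <= INR I * Dy + 2 * Ls * Dx.
  rewrite /N.
  apply: Rle_trans (_ : norm (vscale (INR I) (vsub (y k i) yb)) + norm (vsum (fun j => vsub (gf j (x k j)) (gf j (x k i)))) <= _).
    apply: norm_tri => c.
    rewrite /yb /vsub /vscale /vsum sumB Inv.
    set A1 := \big[Rplus/0]_(j < I) gf j (x k j) c.
    set B1 := \big[Rplus/0]_(j < I) gf j (x k i) c.
    field; lra.
  apply: Rplus_le_compat.
    rewrite (@norm_scale m (INR I) (vsub (y k i) yb) (vscale (INR I) (vsub (y k i) yb))) // Rabs_right; [apply: Rmult_le_compat_l; [lra| rewrite /Dy; lra] | lra].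
  apply: Rle_trans (norm_vsum _) _.
  apply: Rle_trans (_ : \big[Rplus/0]_(j < I) (Ls * norm (vsub (x k j) xb) + L j * Dx) <= _).
    apply: sum_le => j.
    have [L0 Lj] := HL j. have hl := Lj _ _ (Xx k j) (Xx k i).
    have ht := norm_vsub_tri (x k j) xb (x k i).
    rewrite (norm_vsub_sym xb (x k i)) in ht.
    have hx : norm (vsub (x k i) xb) <= Dx.
      exact: (@sum_ge_term _ (fun j => norm (vsub (x k j) xb)) i (fun j => norm_ge0 _)).
    have hL : L j <= Ls.
      exact: (@sum_ge_term _ L j (fun j => proj1 (HL j))).
    have n1 := norm_ge0 (vsub (x k j) xb).
    have n2 := norm_ge0 (vsub (x k i) xb).
    nra.
  rewrite sumD sumZ -big_distrl /=.
  have -> : \big[Rplus/0]_(j < I) norm (vsub (x k j) xb) = Dx by [].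
  have -> : \big[Rplus/0]_(j < I) L j = Ls by [].
  lra.
have ti : / tau i <= T.
  apply: (@sum_ge_term _ (fun j => / tau j) i) => j; apply: Rlt_le; apply: Rinv_0_lt_compat; exact: tpos.
have N0 : 0 <= N := norm_ge0 _.
have h1 : 2 / tau i * N <= 2 * T * (INR I * Dy + 2 * Ls * Dx).
  rewrite /Rdiv !Rmult_assoc; apply: Rmult_le_compat_l; first lra.
  have ti0 : 0 <= / tau i by apply: Rlt_le; apply: Rinv_0_lt_compat; exact: tpos.
  apply: Rmult_le_compat => //; lra.
have h2 : INR I * Dy + 2 * Ls * Dx <= (INR I + 2 * Ls) * (Dy + Dx) by nra.
have h3 : 2 * T * (INR I * Dy + 2 * Ls * Dx) <= 2 * T * ((INR I + 2 * Ls) * (Dy + Dx)).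
  apply: Rmult_le_compat_l => //; lra.
have h4 : (2 * T * (INR I + 2 * Ls) + 1) * (Dy + Dx) = 2 * T * ((INR I + 2 * Ls) * (Dy + Dx)) + (Dy + Dx) by ring.
rewrite h4; lra.
Qed.
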